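(* Let $(Y,X,A)$ be a random triple with $Y\in\mathbb{R}$, $X\in\mathcal{X}\subset\mathbb{R}^d$ having density $p(x)$, and $A\in\{0,1\}$, with $\mathbb{E}[Y^2]<\infty$. Define the response functions $\mu_a(x)=\mathbb{E}[Y\mid X=x,A=a]$ for $a\in\{0,1\}$, the propensity score $e(x)=\mathbb{P}(A=1\mid X=x)$, the conditional mean outcome $m(x)=\mathbb{E}[Y\mid X=x]$, and $\tau(x)=\mu_1(x)-\mu_0(x)$. For $a\in\{0,1\}$ let $\sigma_y^2(x;a)=\int (y-\mu_a(x))^2\, p(y\mid X=x, A=a)\,dy$ and $\tilde\sigma_B^2(a)=\int_{\mathcal{X}}\sigma_y^2(x;a)\,p(x;a)\,dx$, where $p(x;a)$ denotes the joint density of $(X=x,A=a)$. Let $f:\mathcal{X}\times\{0,1\}\to\mathbb{R}$ be an outcome model (with $\mathbb{E}[f(X,a)^2]<\infty$) and $\tau_f(x)=f(x,1)-f(x,0)$. Define $$R\text{-risk}^*(f)=\mathbb{E}\Big[\big((Y-m(X))-(A-e(X))\,\tau_f(X)\big)^2\Big].$$ Then $$R\text{-risk}^*(f)=\int_{\mathcal{X}} e(x)\big(1-e(x)\big)\big(\tau(x)-\tau_f(x)\big)^2\,p(x)\,dx+\tilde\sigma_B^2(1)+\tilde\sigma_B^2(0).$$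
   Context: Setting of binary-treatment causal inference in the potential outcomes framework; under the standard strong ignorability assumptions $\tau(x)=\mu_1(x)-\mu_0(x)$ is the conditional average treatment effect, and $\int (\tau(x)-\tau_f(x))^2p(x)dx$ is the oracle ''$\tau$-risk'' of $f$. The risk $R\text{-risk}^*$ is the semi-oracle R-risk, using the true nuisances $m$ and $e$. *)

(* Defs.v *)
From HB Require Import structures.
From mathcomp Require Import all_boot all_order all_algebra.
From mathcomp Require Import all_classical all_reals all_analysis.

Set Implicit Arguments.
Unset Strict Implicit.
Unset Printing Implicit Defensive.

Import Order.TTheory GRing.Theory Num.Theory.
Import numFieldNormedType.Exports.

Local Open Scope classical_set_scope.
Local Open Scope ring_scope.
Local Open Scope ereal_scope.

(* Model of the random triple (Y, X, A):
   - X takes values in a measurable space T, with density p w.r.t. a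
     reference measure mu (Lebesgue measure on X ⊂ R^d in the paper);
   - given X = x, A ~ Bernoulli(e x)  (so e is the propensity score);
   - given X = x, A = a, the conditional law of Y is the probability
     measure K a x on R (a probability kernel from T to R).
   The treatment A ∈ {0,1} is encoded as a boolean (true = 1). *)

Section model.
Context {R : realType} {d : measure_display} {T : measurableType d}.
Variables (mu : {measure set T -> \bar R}) (p e : T -> R)
          (K : bool -> R.-pker T ~> R).

Definition condE (g : R -> bool -> \bar R) (x : T) : \bar R :=
  (e x)%:E * \int[K true x]_y g y true
  + (1 - e x)%:E * \int[K false x]_y g y false.

Definition Expect (g : R -> T -> bool -> \bar R) : \bar R :=
  \int[mu]_x ((p x)%:E * condE (fun y a => g y x a) x).

Definition pxa (x : T) (a : bool) : R :=
  p x * (if a then e x else 1 - e x)%R.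

Definition resp (a : bool) (x : T) : R := fine (\int[K a x]_y y%:E).

Definition mout (x : T) : R := fine (condE (fun y _ => y%:E) x).

Definition tau (x : T) : R := (resp true x - resp false x)%R.

Definition sigma2 (a : bool) (x : T) : \bar R :=
  \int[K a x]_y (((y - resp a x) ^+ 2)%R)%:E.

Definition sigmaB2 (a : bool) : \bar R :=
  \int[mu]_x ((pxa x a)%:E * sigma2 a x).

Definition tau_f (f : T -> bool -> R) (x : T) : R := (f x true - f x false)%R.

Definition R_risk_star (f : T -> bool -> R) : \bar R :=
  Expect (fun y x a =>
    ((((y - mout x) - ((a%:R : R) - e x) * tau_f f x) ^+ 2)%R)%:E).

End model.

(* Main.v *)
Require Import Defs.
From HB Require Import structures.
From mathcomp Require Import all_boot all_order all_algebra.
From mathcomp Require Import all_classical all_reals all_analysis.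
From mathcomp Require Import measurable_realfun ring lra.

Import Order.TTheory GRing.Theory Num.Theory.
Import numFieldNormedType.Exports.

Local Open Scope classical_set_scope.
Local Open Scope ring_scope.
Local Open Scope ereal_scope.

Section aux.
Context {R : realType}.
Local Open Scope ereal_scope.
Variable P : {measure set R -> \bar R}.
Hypothesis P1 : P setT = 1.

Lemma msq_aux (c : R) : measurable_fun setT (fun y : R => (((y - c)^+2)%R)%:E).
Proof. apply/measurable_EFinP; apply: measurable_funX; exact: measurable_funB. Qed.

Lemma msq0_aux : measurable_fun setT (fun y : R => ((y^+2)%R)%:E).
Proof. by apply/measurable_EFinP; apply: measurable_funX. Qed.

Lemma int_cst_aux (k : R) : P.-integrable setT (fun _ => k%:E).
Proof.
apply/integrableP; split; first exact: measurable_cst.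
by rewrite integral_cst //= P1 mule1 ltry.
Qed.

Lemma int_id_aux : P.-integrable setT (fun y => ((y^+2)%R)%:E) ->
  P.-integrable setT (fun y => y%:E).
Proof.
move=> H.
have I1 : P.-integrable setT (fun y => ((1 + y^+2)%R)%:E).
  under eq_fun do rewrite EFinD.
  exact: integrableD (int_cst_aux 1) H.
apply: (le_integrable measurableT _ _ I1).
- by apply/measurable_EFinP.
- move=> y _ /=; rewrite lee_fin.
  have h0 : (0 <= `|y|)%R by [].
  have h2 : (`|y| ^+ 2 = y ^+ 2)%R by rewrite real_normK ?num_real.
  rewrite (ger0_norm (x := (1 + y^+2)%R)); last by rewrite addr_ge0 ?sqr_ge0.
  nra.
Qed.

Lemma sq_infty_aux : ~ P.-integrable setT (fun y => ((y^+2)%R)%:E) ->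
  forall c : R, \int[P]_y (((y - c)^+2)%R)%:E = +oo.
Proof.
move=> NI c.
have I2 : \int[P]_y ((y^+2)%R)%:E = +oo.
  apply/eqP; rewrite -leye_eq leNgt; apply/negP => Hlt.
  apply: NI; apply/integrableP; split; first exact: msq0_aux.
  under eq_integral do rewrite gee0_abs ?lee_fin ?sqr_ge0 //.
  by [].
have Hle : \int[P]_y ((y^+2)%R)%:E <=
    \int[P]_y (2%:E * (((y - c)^+2)%R)%:E + ((2 * c^+2)%R)%:E).
  apply: ge0_le_integral => //.
  - by move=> y _; rewrite lee_fin sqr_ge0.
  - exact: msq0_aux.
  - apply: emeasurable_funD; last exact: measurable_cst.
    by apply: emeasurable_funM; [exact: measurable_cst|exact: msq_aux].
  - move=> y _; rewrite -EFinM -EFinD lee_fin.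
    have := sqr_ge0 (y - 2 * c)%R; nra.
rewrite ge0_integralD // in Hle; first last.
- by move=> y _; rewrite lee_fin mulr_ge0 ?sqr_ge0.
- by apply: emeasurable_funM; [exact: measurable_cst|exact: msq_aux].
- by move=> y _; rewrite mule_ge0 ?lee_fin ?sqr_ge0.
rewrite ge0_integralZl // in Hle; first last.
- by move=> y _; rewrite lee_fin sqr_ge0.
- exact: msq_aux.
move: Hle; rewrite I2 integral_cst //= P1 mule1.
have : 0 <= \int[P]_y (((y - c)^+2)%R)%:E.
  by apply: integral_ge0 => y _; rewrite lee_fin sqr_ge0.
by case: (\int[P]_y (((y - c)^+2)%R)%:E) => [r| |] //= _; rewrite leye_eq.
Qed.

Lemma notfin_aux : ~ (\int[P]_y y%:E \is a fin_num) ->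
  forall c : R, \int[P]_y (((y - c)^+2)%R)%:E = +oo.
Proof.
move=> NF; apply: sq_infty_aux => H; apply: NF.
exact: integrable_fin_num (int_id_aux H).
Qed.

Lemma var_decomp_aux (c : R) :
  \int[P]_y (((y - c)^+2)%R)%:E =
  \int[P]_y (((y - fine (\int[P]_y y%:E))^+2)%R)%:E
  + (((fine (\int[P]_y y%:E) - c)^+2)%R)%:E.
Proof.
have [H|NH] := pselect (P.-integrable setT (fun y => ((y^+2)%R)%:E)); last first.
  by rewrite !sq_infty_aux.
have Hid := int_id_aux H.
have G : forall c : R, \int[P]_y (((y - c)^+2)%R)%:E =
   \int[P]_y ((y^+2)%R)%:E + (- (2 * c))%:E * \int[P]_y y%:E + ((c^+2)%R)%:E.
  move=> c'.
  rewrite (eq_integral (fun y : R => (((y^+2)%R)%:E + (- (2 * c'))%:E * y%:E) + ((c'^+2)%R)%:E)); last first.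
    by move=> y _; rewrite -!EFinM -!EFinD; congr EFin; ring.
  rewrite integralD //; last 2 first.
  - by apply: integrableD => //; exact: integrableZl.
  - exact: int_cst_aux.
  rewrite integralD //; last exact: integrableZl.
  by rewrite integralZl // integral_cst //= P1 mule1.
rewrite !G.
rewrite -(fineK (integrable_fin_num measurableT H)).
rewrite -(fineK (integrable_fin_num measurableT Hid)).
rewrite -!EFinM -!EFinD; congr EFin; rewrite /=; ring.
Qed.

End aux.

Section aux2.
Context {R : realType}.
Local Open Scope ereal_scope.

Lemma ecomb_aux (p e d1 d0 Dd : R) (S1 S0 : \bar R) : 0 <= S1 -> 0 <= S0 ->
  (0 < p)%R -> (0 < e)%R -> (e < 1)%R ->
  (S1 = +oo \/ S0 = +oo \/ (e * d1 + (1 - e) * d0 = e * (1 - e) * Dd)%R) ->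
  p%:E * (e%:E * (S1 + d1%:E) + (1 - e)%:E * (S0 + d0%:E)) =
  (e * (1 - e) * Dd * p)%:E + (p * e)%:E * S1 + (p * (1 - e))%:E * S0.
Proof.
move=> S10 S00 p0 e0 e1 H.
have e1' : (0 < 1 - e)%R by lra.
have pe : (0 < p * e)%R by rewrite mulr_gt0.
have pe' : (0 < p * (1 - e))%R by rewrite mulr_gt0.
case: S1 S10 H => [s1| |] // S10 H; case: S0 S00 H => [s0| |] // S00 H.
- case: H => [//|[//|H]].
  rewrite -?EFinD -?EFinM -?EFinD -?EFinM -?EFinD; congr EFin.
  transitivity (p * (e * d1 + (1 - e) * d0) + p * e * s1 + p * (1 - e) * s0)%R; first ring.
  rewrite H; ring.
- rewrite addye // gt0_muley ?lte_fin // addey // gt0_muley ?lte_fin //.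
  by rewrite gt0_muley ?lte_fin // addey.
- rewrite addye // gt0_muley ?lte_fin // addye // gt0_muley ?lte_fin //.
  by rewrite gt0_muley ?lte_fin // -addeA addye.
- rewrite addye // gt0_muley ?lte_fin // addye // gt0_muley ?lte_fin //.
  by rewrite !gt0_muley ?lte_fin //.
Qed.
Lemma ecomb0_aux (p d1 d0 Dd : R) (S1 S0 : \bar R) : d0 = 0%R ->
  p%:E * (0%:E * (S1 + d1%:E) + (1 - 0)%:E * (S0 + d0%:E)) =
  (0 * (1 - 0) * Dd * p)%:E + (p * 0)%:E * S1 + (p * (1 - 0))%:E * S0.
Proof.
move=> ->; have E0 : (0:R)%:E = 0 :> \bar R by [].
rewrite !mul0r mulr0 subr0 mulr1 !E0 !mul0e mul1e adde0 !add0e.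
by [].
Qed.

Lemma ecomb1_aux (p d1 d0 Dd : R) (S1 S0 : \bar R) : d1 = 0%R ->
  p%:E * (1%:E * (S1 + d1%:E) + (1 - 1)%:E * (S0 + d0%:E)) =
  (1 * (1 - 1) * Dd * p)%:E + (p * 1)%:E * S1 + (p * (1 - 1))%:E * S0.
Proof.
move=> ->; have E0 : (0:R)%:E = 0 :> \bar R by [].
rewrite subrr !mulr0 !mul0r mulr1 !E0 !mul0e mul1e !adde0 add0e.
by [].
Qed.
End aux2.

Section aux3.
Context {R : realType}.
Local Open Scope ereal_scope.

Lemma pw_aux (P1 P0 : {measure set R -> \bar R}) (h1 : P1 setT = 1) (h0 : P0 setT = 1)
  (p e t : R) (hp : (0 <= p)%R) (he : (0 <= e <= 1)%R) :
  let m := fine (e%:E * \int[P1]_y y%:E + (1 - e)%:E * \int[P0]_y y%:E) in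
  let mu1 := fine (\int[P1]_y y%:E) in
  let mu0 := fine (\int[P0]_y y%:E) in
  p%:E * (e%:E * \int[P1]_y ((((y - m) - (1 - e) * t)^+2)%R)%:E
          + (1 - e)%:E * \int[P0]_y ((((y - m) - (0 - e) * t)^+2)%R)%:E)
  = ((e * (1 - e) * (mu1 - mu0 - t)^+2 * p)%R)%:E
    + ((p * e)%R)%:E * \int[P1]_y (((y - mu1)^+2)%R)%:E
    + ((p * (1 - e))%R)%:E * \int[P0]_y (((y - mu0)^+2)%R)%:E.
Proof.
move=> m mu1 mu0.
have E1 : \int[P1]_y ((((y - m) - (1 - e) * t)^+2)%R)%:E =
          \int[P1]_y (((y - (m + (1 - e) * t))^+2)%R)%:E.
  by apply: eq_integral => y _; congr EFin; ring.
have E0 : \int[P0]_y ((((y - m) - (0 - e) * t)^+2)%R)%:E =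
          \int[P0]_y (((y - (m - e * t))^+2)%R)%:E.
  by apply: eq_integral => y _; congr EFin; ring.
rewrite E1 E0 (var_decomp_aux _ h1 (m + (1 - e) * t)) (var_decomp_aux _ h0 (m - e * t)).
rewrite -/mu1 -/mu0.
have S10 : 0 <= \int[P1]_y (((y - mu1)^+2)%R)%:E.
  by apply: integral_ge0 => y _; rewrite lee_fin sqr_ge0.
have S00 : 0 <= \int[P0]_y (((y - mu0)^+2)%R)%:E.
  by apply: integral_ge0 => y _; rewrite lee_fin sqr_ge0.
have [p0|pnz] := eqVneq p 0%R.
  by rewrite p0 mul0e !mulr0 !mul0r !mul0e !adde0.
have pp : (0 < p)%R by rewrite lt0r pnz hp.
case/andP: he => he0 he1.
have [e0|enz] := eqVneq e 0%R.
  have mE : m = mu0.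
  rewrite /m e0 mul0e add0e subr0 mul1e; reflexivity.
  rewrite mE e0; apply: ecomb0_aux; ring.

have [e1|ne1] := eqVneq e 1%R.
  have mE : m = mu1.
    rewrite /m e1 subrr mul0e adde0 mul1e; reflexivity.
  rewrite mE e1; apply: ecomb1_aux; ring.
have ep : (0 < e)%R by rewrite lt0r enz he0.
have el : (e < 1)%R by rewrite lt_neqAle ne1 he1.
apply: ecomb_aux => //.
have [f1|nf1] := boolP (\int[P1]_y y%:E \is a fin_num); last first.
  by left; apply: notfin_aux => //; exact/negP.
have [f0|nf0] := boolP (\int[P0]_y y%:E \is a fin_num); last first.
  by right; left; apply: notfin_aux => //; exact/negP.
right; right.
have mE : m = (e * mu1 + (1 - e) * mu0)%R.
  by rewrite /m -(fineK f1) -(fineK f0) -!EFinM -EFinD.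
rewrite mE; ring.
Qed.
End aux3.

Section meas_aux.
Context {R : realType} {d : measure_display} {T : measurableType d}.
Variable K : bool -> R.-pker T ~> R.

Lemma mresp_aux a : measurable_fun setT (resp K a).
Proof.
rewrite /resp.
have -> : (fun x => fine (\int[K a x]_y y%:E)) =
   fine \o (fun x => \int[K a x]_y (fun y : R => y%:E)^\+ y - \int[K a x]_y (fun y : R => y%:E)^\- y).
  by apply/funext => x /=; rewrite integralE.
apply: measurableT_comp; first exact: (fine_measurable measurableT).
apply: emeasurable_funB.
- apply: measurable_fun_integral_kernel.
  + exact: measurable_kernel.
  + by move=> z; exact: funepos_ge0.
  + by apply: measurable_funepos; apply/measurable_EFinP.
- apply: measurable_fun_integral_kernel.
  + exact: measurable_kernel.
  + by move=> z; exact: funeneg_ge0.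
  + by apply: measurable_funeneg; apply/measurable_EFinP.
Qed.

Lemma msigma_aux a : measurable_fun setT (sigma2 K a).
Proof.
rewrite /sigma2.
apply: (measurable_fun_integral_finite_kernel
          (fun z : T * R => (((z.2 - resp K a z.1)^+2)%R)%:E) (K a)).
- by move=> z; rewrite lee_fin sqr_ge0.
- apply/measurable_EFinP; apply: measurable_funX; apply: measurable_funB.
  + exact: measurable_snd.
  + exact: measurableT_comp (mresp_aux a) measurable_fst.
Qed.
End meas_aux.

Theorem proposition2 (R : realType) (d : measure_display) (T : measurableType d)
  (mu : {measure set T -> \bar R}) (p e : T -> R) (K : bool -> R.-pker T ~> R)
  (f : T -> bool -> R) :
  measurable_fun [set: T] p ->
  (forall x, (0 <= p x)%R) ->
  \int[mu]_x (p x)%:E = 1 ->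
  measurable_fun [set: T] e ->
  (forall x, (0 <= e x <= 1)%R) ->
  Expect mu p e K (fun y _ _ => ((y ^+ 2)%R)%:E) < +oo ->
  (forall a, measurable_fun [set: T] (fun x => f x a)) ->
  (forall a, \int[mu]_x ((p x * f x a ^+ 2)%R)%:E < +oo) ->
  R_risk_star mu p e K f =
    \int[mu]_x ((e x * (1 - e x) * (tau K x - tau_f f x) ^+ 2 * p x)%R)%:E
    + sigmaB2 mu p e K true + sigmaB2 mu p e K false.
Proof.
move=> mp hp _ me he _ mf _.
rewrite /R_risk_star /Expect.
transitivity (\int[mu]_x (((e x * (1 - e x) * (tau K x - tau_f f x) ^+ 2 * p x)%R)%:E
   + (pxa p e x true)%:E * sigma2 K true x + (pxa p e x false)%:E * sigma2 K false x)).
  apply: eq_integral => x _.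
  have := (pw_aux (K true x) (K false x) (prob_kernel x) (prob_kernel x) (p x) (e x) (tau_f f x) (hp x) (he x)).
  rewrite /condE /mout /condE /tau /resp /sigma2 /pxa /= => H; exact: H.
have mtau : measurable_fun setT (tau K).
  by apply: measurable_funB; exact: mresp_aux.
have mtf : measurable_fun setT (tau_f f).
  by apply: measurable_funB; exact: mf.
have m1e : measurable_fun setT (fun x => 1 - e x)%R.
  by apply: measurable_funB => //; exact: measurable_cst.
have mF1 : measurable_fun setT
    (fun x => ((e x * (1 - e x) * (tau K x - tau_f f x) ^+ 2 * p x)%R)%:E).
  apply/measurable_EFinP; apply: measurable_funM => //.
  apply: measurable_funM; first exact: measurable_funM.
  by apply: measurable_funX; exact: measurable_funB.
have mF a : measurable_fun setT (fun x => (pxa p e x a)%:E * sigma2 K a x).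
  apply: emeasurable_funM; last exact: msigma_aux.
  apply/measurable_EFinP; rewrite /pxa; apply: measurable_funM => //.
  by case: a.
have F1ge0 : forall x, 0 <= ((e x * (1 - e x) * (tau K x - tau_f f x) ^+ 2 * p x)%R)%:E.
  move=> x; rewrite lee_fin; have /andP[h0 h1] := he x.
  apply: mulr_ge0 => //; apply: mulr_ge0; last exact: sqr_ge0.
  by apply: mulr_ge0 => //; rewrite subr_ge0.
have Fge0 a : forall x, 0 <= (pxa p e x a)%:E * sigma2 K a x.
  move=> x; apply: mule_ge0.
    rewrite lee_fin /pxa; have /andP[h0 h1] := he x.
    by case: a; apply: mulr_ge0 => //=; rewrite subr_ge0.
  by apply: integral_ge0 => y _; rewrite lee_fin sqr_ge0.
rewrite ge0_integralD //; last first.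
- exact: (emeasurable_funD mF1 (mF true)).
- by move=> x _; apply: adde_ge0.
by rewrite ge0_integralD.
Qed.
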